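(* Let $n\ge2$, $1\le k\le n-1$. Let $Y$ have a continuous distribution function $G$ on $[l_G,r_G]$, and let $g$ be continuous and strictly increasing on $(l_G,r_G)$ with $g(l_G^+):=\lim_{y\to l_G^+}g(y)>-\infty$ and $\lim_{y\to r_G^-}g(y)=\infty$. Then \[ E[g(Y(n))\mid Y(n-k)=s,\ Y(n+1)=t]=\frac{k\,g(t)+g(s)}{k+1}\qquad (l_G<s<t<r_G) \] holds if and only if $G(y)=1-e^{-c[g(y)-g(l_G^+)]}$ for $l_G<y<r_G$, for some constant $c>0$.
   Context: $Y_1,Y_2,\dots$ are i.i.d. copies of $Y$ with distribution function $G$; $l_G=\inf\{y:G(y)>0\}$, $r_G=\sup\{y:G(y)<1\}$. Upper record times $L(1)=1$, $L(m)=\min\{j>L(m-1):Y_j>Y_{L(m-1)}\}$, record values $Y(m)=Y_{L(m)}$. With $R(y)=-\ln(1-G(y))$, conditional expectations given $Y(n-k)=s$, $Y(n+1)=t$ use the conditional density of $Y(n)$: $k[\frac{R(x)-R(s)}{R(t)-R(s)}]^{k-1}\frac{R'(x)}{R(t)-R(s)}$, $s<x<t$. *)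

(* Defs.v *)
From Stdlib Require Import Reals Lra.
Open Scope R_scope.

Definition is_cont_dist_fun (G : R -> R) : Prop :=
  (forall x y, x <= y -> G x <= G y) /\
  (forall x, continuity_pt G x) /\
  (forall eps, eps > 0 -> exists M, forall x, x <= M -> Rabs (G x) < eps) /\
  (forall eps, eps > 0 -> exists M, forall x, x >= M -> Rabs (G x - 1) < eps).

(* For continuous G, the open interval (l_G, r_G) is exactly {y | 0 < G y < 1}
   (this holds also when l_G = -oo or r_G = +oo). *)
Definition in_supp (G : R -> R) (y : R) : Prop := 0 < G y < 1.

Definition Rhaz (G : R -> R) (y : R) : R := - ln (1 - G y).

(* Conditional distribution function of Y(n) given Y(n-k)=s, Y(n+1)=t:
   F(x) = [(R(x)-R(s))/(R(t)-R(s))]^k on [s,t]; its density is the one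
   given in the paper when R is differentiable. *)
Definition rec_cond_cdf (G : R -> R) (k : nat) (s t x : R) : R :=
  ((Rhaz G x - Rhaz G s) / (Rhaz G t - Rhaz G s)) ^ k.

Fixpoint RS_sum_aux (f F : R -> R) (a h : R) (N : nat) : R :=
  match N with
  | O => 0
  | S m => RS_sum_aux f F a h m
           + f (a + INR m * h) * (F (a + INR (S m) * h) - F (a + INR m * h))
  end.

Definition RS_seq (f F : R -> R) (a b : R) (N : nat) : R :=
  RS_sum_aux f F a ((b - a) / INR (S N)) (S N).

(* E[g(Y(n)) | Y(n-k)=s, Y(n+1)=t] = v, i.e. the Riemann-Stieltjes integral
   int_s^t g dF (F the conditional cdf above) equals v. *)
Definition cond_exp_rec (G g : R -> R) (k : nat) (s t v : R) : Prop :=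
  Un_cv (RS_seq g (rec_cond_cdf G k s t) s t) v.

(* Main.v *)
Require Import Defs.
From Stdlib Require Import Reals Lra Lia Psatz Ranalysis5.
Open Scope R_scope.


Lemma tangent (n:nat) (a x:R): 0<=a -> 0<=x ->
  a^(S n) + INR (S n) * a^n * (x-a) <= x^(S n).
Proof.
  intros Ha Hx. induction n as [|n IH].
  - simpl. lra.
  - assert (Hp: 0 <= a^n) by (apply pow_le; lra).
    rewrite S_INR in *. replace (x^(S (S n))) with (x * x^(S n)) by reflexivity.
    replace (a^(S (S n))) with (a*a^(S n)) by reflexivity.
    replace (a^(S n)) with (a*a^n) in * by reflexivity.
    replace (x^(S n)) with (x*x^n) in * by reflexivity.
    assert (0 <= INR n) by apply pos_INR.
    set (p := a^n) in *. set (q := x^n) in *.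
    assert (H1: x*(a*p + (INR n + 1)*p*(x-a)) <= x*(x*q)) by (apply Rmult_le_compat_l; lra).
    assert (H2: 0 <= (INR n + 1)*p*((x-a)*(x-a))).
    { apply Rmult_le_pos; [apply Rmult_le_pos; lra | apply Rle_0_sqr]. }
    rewrite S_INR; clearbody p q; nra.
Qed.

Lemma term_bound (j:nat) (w w':R): 0<=w<=w' ->
  w*(w'^(S j) - w^(S j)) <= INR (S j)/(INR (S j)+1) * (w'^(S (S j)) - w^(S (S j)))
  <= w'*(w'^(S j) - w^(S j)).
Proof.
  intros [H0 H1].
  pose proof (tangent (S j) w w' H0 ltac:(lra)) as T1.
  pose proof (tangent (S j) w' w ltac:(lra) H0) as T2.
  rewrite (S_INR (S j)) in T1, T2.
  set (K := INR (S j)) in *.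
  assert (HK: 0 < K) by (unfold K; apply lt_0_INR; lia).
  replace (w'^(S (S j))) with (w' * w'^(S j)) in * by reflexivity.
  replace (w^(S (S j))) with (w * w^(S j)) in * by reflexivity.
  set (P := w^(S j)) in *. set (P' := w'^(S j)) in *. clearbody K P P'.
  split.
  - apply (Rmult_le_reg_l (K+1)); [lra|].
    replace ((K+1) * (K/(K+1) * (w' * P' - w * P))) with (K * (w' * P' - w * P)) by (field; lra).
    nra.
  - apply (Rmult_le_reg_l (K+1)); [lra|].
    replace ((K+1) * (K/(K+1) * (w' * P' - w * P))) with (K * (w' * P' - w * P)) by (field; lra).
    nra.
Qed.


Lemma sum_bound (f F w: R->R) (a h gs D eta: R) (j:nat) (n:nat):
 0 <= D ->
 (forall m, (m <= n)%nat -> f (a + INR m * h) = gs + D * w (a + INR m*h) /\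
     F (a+INR m*h) = (w (a+INR m*h))^(S j) /\ 0 <= w (a+INR m*h)) ->
 (forall m, (m < n)%nat -> w (a+INR m*h) <= w(a+INR (S m)*h) <= w (a+INR m*h) + eta) ->
 gs*((w (a+INR n*h))^(S j) - (w (a+INR 0*h))^(S j))
   + D*(INR (S j)/(INR (S j)+1) * ((w (a+INR n*h))^(S (S j)) - (w (a+INR 0*h))^(S (S j))))
   - D*eta*((w (a+INR n*h))^(S j) - (w (a+INR 0*h))^(S j))
 <= RS_sum_aux f F a h n <=
 gs*((w (a+INR n*h))^(S j) - (w (a+INR 0*h))^(S j))
   + D*(INR (S j)/(INR (S j)+1) * ((w (a+INR n*h))^(S (S j)) - (w (a+INR 0*h))^(S (S j)))).
Proof.
  intros HD Hp Hm. induction n as [|n IH].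
  - simpl. lra.
  - assert (IH' := IH (fun m Hm' => Hp m ltac:(lia)) (fun m Hm' => Hm m ltac:(lia))).
    replace (RS_sum_aux f F a h (S n)) with (RS_sum_aux f F a h n + f (a + INR n * h) * (F (a + INR (S n) * h) - F (a + INR n * h))) by reflexivity.
    destruct (Hp n ltac:(lia)) as [Hf [HF Hw]].
    destruct (Hp (S n) ltac:(lia)) as [_ [HF' Hw']].
    destruct (Hm n ltac:(lia)) as [Hle Heta].
    rewrite Hf, HF, HF'.
    set (u := w (a + INR n * h)) in *. set (u' := w (a + INR (S n) * h)) in *.
    set (u0 := w (a + INR 0 * h)) in *.
    pose proof (term_bound j u u' ltac:(lra)) as [T1 T2].
    assert (HD0 : 0 <= u'^(S j) - u^(S j)).
    { assert (u^(S j) <= u'^(S j)) by (apply pow_incr; lra). lra. }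
    set (K := INR (S j) / (INR (S j) + 1)) in *.
    replace (u' ^ S (S j)) with (u' * u'^(S j)) in * by reflexivity.
    replace (u ^ S (S j)) with (u * u^(S j)) in * by reflexivity.
    replace (u0 ^ S (S j)) with (u0 * u0^(S j)) in * by reflexivity.
    set (P := u^(S j)) in *. set (P' := u'^(S j)) in *. set (P0 := u0^(S j)) in *.
    clearbody u u' u0 K P P' P0.
    assert (E1: D * (u * (P' - P)) <= D * (K * (u'*P' - u*P))) by (apply Rmult_le_compat_l; lra).
    assert (E2: (u' - u) * (P' - P) <= eta * (P' - P)) by (apply Rmult_le_compat_r; lra).
    assert (E3: D*((u' - u) * (P' - P)) <= D*(eta * (P' - P))) by (apply Rmult_le_compat_l; lra).
    assert (E4: D*(K * (u'*P' - u*P)) <= D*(u'*(P'-P))) by (apply Rmult_le_compat_l; lra).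
    split; nra.
Qed.


Lemma supp_between (G : R -> R) x y z :
  (forall x y, x <= y -> G x <= G y) ->
  in_supp G x -> in_supp G z -> x <= y <= z -> in_supp G y.
Proof.
  intros Hm [Hx1 Hx2] [Hz1 Hz2] [H1 H2]. unfold in_supp.
  pose proof (Hm _ _ H1). pose proof (Hm _ _ H2). lra.
Qed.

Lemma g_le (G g : R -> R) x y :
  (forall x y, in_supp G x -> in_supp G y -> x < y -> g x < g y) ->
  in_supp G x -> in_supp G y -> x <= y -> g x <= g y.
Proof.
  intros Hg Hx Hy H. destruct (Req_dec x y) as [->|Hne]; [lra|].
  left. apply Hg; auto. lra.
Qed.

Lemma grid_in (s t : R) (N m : nat) : s < t -> (m <= S N)%nat ->
  s <= s + INR m * ((t - s) / INR (S N)) <= t.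
Proof.
  intros Hst Hm.
  assert (HN: 0 < INR (S N)) by (apply lt_0_INR; lia).
  assert (Hm': 0 <= INR m <= INR (S N)) by (split; [apply pos_INR | apply le_INR; lia]).
  assert (Hh : 0 < (t - s) / INR (S N)) by (apply Rdiv_lt_0_compat; lra).
  split.
  - assert (0 <= INR m * ((t - s) / INR (S N))) by (apply Rmult_le_pos; lra). lra.
  - assert (INR m * ((t - s) / INR (S N)) <= INR (S N) * ((t - s) / INR (S N))) by (apply Rmult_le_compat_r; lra).
    replace (INR (S N) * ((t - s) / INR (S N))) with (t - s) in H by (field; lra). lra.
Qed.

Lemma backward (G g : R->R) (gl c : R) (k:nat) (s t : R):
 (1 <= k)%nat -> (forall x y, x <= y -> G x <= G y) ->
 (forall y, in_supp G y -> continuity_pt g y) ->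
 (forall x y, in_supp G x -> in_supp G y -> x < y -> g x < g y) ->
 c > 0 -> (forall y, in_supp G y -> G y = 1 - exp (- c * (g y - gl))) ->
 in_supp G s -> in_supp G t -> s < t ->
 cond_exp_rec G g k s t ((INR k * g t + g s)/(INR k + 1)).
Proof.
  intros Hk Hm Hc Hg Hc0 HG Hs Ht Hst.
  destruct k as [|j]; [lia|].
  assert (HRh : forall x, in_supp G x -> Rhaz G x = c * (g x - gl)).
  { intros x Hx. unfold Rhaz. rewrite (HG x Hx).
    replace (1 - (1 - exp (- c * (g x - gl)))) with (exp (- c * (g x - gl))) by ring.
    rewrite ln_exp. ring. }
  set (D := g t - g s).
  assert (HD : 0 < D) by (unfold D; pose proof (Hg s t Hs Ht Hst); lra).
  set (w := fun x => (g x - g s) / D).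
  intros eps Heps.
  set (eta := eps / (2 * D)).
  assert (Heta : 0 < eta) by (unfold eta; apply Rdiv_lt_0_compat; lra).
  assert (HetaD : 0 < eta * D) by (apply Rmult_lt_0_compat; lra).
  destruct (Heine_cor1 (f:=g) Hst) with (eps := mkposreal _ HetaD) as [delta [_ Hdel]].
  { intros x Hx. apply Hc. apply (supp_between G s x t); auto. }
  simpl in Hdel.
  assert (Hdp : 0 < delta / (t - s)) by (apply Rdiv_lt_0_compat; [apply cond_pos | lra]).
  destruct (archimed_cor1 _ Hdp) as [N0 [HN0 HN0p]].
  exists N0. intros N HN.
  unfold RS_seq, Rdist.
  set (h := (t - s) / INR (S N)).
  assert (HSN: 0 < INR (S N)) by (apply lt_0_INR; lia).
  assert (Hh : 0 < h) by (unfold h; apply Rdiv_lt_0_compat; lra).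
  assert (Hhd : h < delta).
  { unfold h. assert (HN0r: 0 < INR N0) by (apply lt_0_INR; lia).
    assert (INR N0 <= INR (S N)) by (apply le_INR; lia).
    assert (/ INR (S N) <= / INR N0) by (apply Rinv_le_contravar; lra).
    assert (Hds: 0 < delta) by apply cond_pos.
    apply Rle_lt_trans with ((t - s) * / INR N0).
    - unfold Rdiv. apply Rmult_le_compat_l; lra.
    - replace (pos delta) with ((t - s) * (delta / (t - s))) by (field; lra).
      apply Rmult_lt_compat_l; lra. }
  assert (Hin : forall m, (m <= S N)%nat -> in_supp G (s + INR m * h)).
  { intros m Hm'. apply (supp_between G s _ t); auto. apply grid_in; auto. }
  pose proof (sum_bound g (rec_cond_cdf G (S j) s t) w s h (g s) D eta j (S N)
     ltac:(lra)) as SB.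
  destruct SB as [SB1 SB2].
  - intros m Hm'. pose proof (Hin m Hm') as Hx.
    pose proof (grid_in s t N m Hst Hm') as [Hx1 Hx2]. fold h in Hx1, Hx2.
    split; [|split].
    + unfold w; cbv beta. generalize (g (s + INR m * h)) (g s) D HD. intros. field. lra.
    + unfold rec_cond_cdf, w. rewrite (HRh _ Hx), (HRh _ Hs), (HRh _ Ht).
      f_equal. unfold D in *. assert (g t - g s <> 0) by (intro; lra). assert (c <> 0) by (intro; lra). replace (c * (g t - gl) - c * (g s - gl)) with (c * (g t - g s)) by ring. field. split; auto.
    + unfold w. unfold Rdiv. apply Rmult_le_pos; [|left; apply Rinv_0_lt_compat; lra].
      pose proof (g_le G g s _ Hg Hs Hx Hx1). lra.
  - intros m Hm'. pose proof (Hin m ltac:(lia)) as Hx. pose proof (Hin (S m) ltac:(lia)) as Hx'.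
    assert (Hxx : s + INR m * h <= s + INR (S m) * h).
    { rewrite S_INR. lra. }
    pose proof (g_le G g _ _ Hg Hx Hx' Hxx) as Hgle.
    pose proof (grid_in s t N m Hst ltac:(lia)) as Hxm. fold h in Hxm.
    pose proof (grid_in s t N (S m) Hst ltac:(lia)) as HxSm. fold h in HxSm.
    assert (Hd : Rabs ((s + INR (S m) * h) - (s + INR m * h)) < delta).
    { rewrite S_INR. replace (s + (INR m + 1) * h - (s + INR m * h)) with h by ring.
      rewrite Rabs_right; lra. }
    pose proof (Hdel _ _ HxSm Hxm Hd) as Hgd.
    rewrite Rabs_right in Hgd by lra.
    unfold w. split.
    + unfold Rdiv. apply Rmult_le_compat_r; [left; apply Rinv_0_lt_compat; lra| lra].
    + apply (Rmult_le_reg_l D); [lra|].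
      replace (D * ((g (s + INR (S m) * h) - g s) / D)) with (g (s + INR (S m) * h) - g s) by (field; lra).
      replace (D * ((g (s + INR m * h) - g s) / D + eta)) with (g (s + INR m * h) - g s + eta * D) by (field; lra).
      lra.
  - assert (E0 : w (s + INR 0 * h) = 0).
    { unfold w. simpl. replace (s + 0 * h) with s by ring. unfold Rdiv. ring. }
    assert (E1 : w (s + INR (S N) * h) = 1).
    { unfold w, h. replace (s + INR (S N) * ((t - s) / INR (S N))) with t by (field; lra).
      fold D. field. lra. }
    rewrite E0, E1 in SB1, SB2.
    replace (1 ^ S j) with 1 in * by (rewrite pow1; auto).
    replace (1 ^ S (S j)) with 1 in * by (rewrite pow1; auto).
    replace (0 ^ S j) with 0 in * by (simpl; ring).
    replace (0 ^ S (S j)) with 0 in * by (simpl; ring).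
    replace ((INR (S j) * g t + g s) / (INR (S j) + 1)) with
      (g s * (1 - 0) + D * (INR (S j) / (INR (S j) + 1) * (1 - 0))).
    2:{ unfold D. assert (0 <= INR (S j)) by apply pos_INR. field. lra. }
    assert (D * eta = eps / 2) by (unfold eta; field; lra).
    apply Rabs_def1; lra.
Qed.


Lemma G_surj (G : R -> R) v : is_cont_dist_fun G -> 0 < v < 1 -> exists y, G y = v.
Proof.
  intros [Hm [Hc [Hl Hr]]] Hv.
  destruct (Hl v ltac:(lra)) as [M1 HM1].
  destruct (Hr (1 - v) ltac:(lra)) as [M2 HM2].
  set (a := Rmin M1 (M2 - 1)).
  assert (Ha : G a < v).
  { assert (a <= M1) by (unfold a; apply Rmin_l). specialize (HM1 a H).
    apply Rabs_def2 in HM1. lra. }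
  assert (Hb : G M2 > v).
  { specialize (HM2 M2 ltac:(lra)). apply Rabs_def2 in HM2. lra. }
  assert (Hab : a < M2) by (unfold a; pose proof (Rmin_r M1 (M2 - 1)); lra).
  destruct (IVT_interv (fun x => G x - v) a M2) as [z [_ Hz]].
  - intros x _. change (continuity_pt (minus_fct G (fct_cte v)) x).
    apply continuity_pt_minus; auto. apply continuity_pt_const. intros ? ?; reflexivity.
  - exact Hab.
  - lra.
  - lra.
  - exists z. lra.
Qed.

Lemma Rhaz_exp (G : R -> R) x : in_supp G x -> exp (- Rhaz G x) = 1 - G x.
Proof.
  intros [H1 H2]. unfold Rhaz. rewrite Ropp_involutive. apply exp_ln. lra.
Qed.

Lemma ln_le' x y : 0 < x -> x <= y -> ln x <= ln y.
Proof.
  intros H1 H2. destruct (Req_dec x y) as [->|Hne]; [lra|].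
  left. apply ln_increasing; lra.
Qed.

Lemma Rhaz_le (G : R -> R) x y : in_supp G x -> in_supp G y -> G x <= G y -> Rhaz G x <= Rhaz G y.
Proof.
  intros [Hx1 Hx2] [Hy1 Hy2] H. unfold Rhaz.
  assert (ln (1 - G y) <= ln (1 - G x)) by (apply ln_le'; lra). lra.
Qed.

Lemma Rhaz_lt (G : R -> R) x y : in_supp G x -> in_supp G y -> G x < G y -> Rhaz G x < Rhaz G y.
Proof.
  intros [Hx1 Hx2] [Hy1 Hy2] H. unfold Rhaz.
  assert (ln (1 - G y) < ln (1 - G x)) by (apply ln_increasing; lra). lra.
Qed.

Lemma Rhaz_cont (G : R -> R) x : (forall x, continuity_pt G x) -> in_supp G x -> continuity_pt (Rhaz G) x.
Proof.
  intros Hc [H1 H2]. unfold Rhaz.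
  change (continuity_pt (opp_fct (comp ln (minus_fct (fct_cte 1) G))) x).
  apply continuity_pt_opp. apply continuity_pt_comp.
  - apply continuity_pt_minus; auto. apply continuity_pt_const. intros ? ?; reflexivity.
  - apply derivable_continuous_pt. exists (/ (fct_cte 1 x - G x)).
    apply derivable_pt_lim_ln. unfold fct_cte. lra.
Qed.

Lemma bf_cont (G : R -> R) (s x : R) (k : nat) : (forall x, continuity_pt G x) -> in_supp G x ->
  continuity_pt (fun y => (Rhaz G y - Rhaz G s)^k) x.
Proof.
  intros Hc Hx.
  change (continuity_pt (comp (fun y => y^k) (minus_fct (Rhaz G) (fct_cte (Rhaz G s)))) x).
  apply continuity_pt_comp.
  - apply continuity_pt_minus; [apply Rhaz_cont; auto|]. apply continuity_pt_const. intros ? ?; reflexivity.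
  - apply derivable_continuous_pt. apply derivable_pt_pow.
Qed.

Lemma pow_lt_strict (x y : R) (n : nat) : 0 <= x < y -> x^(S n) < y^(S n).
Proof.
  intros [H1 H2]. induction n as [|n IH].
  - simpl. lra.
  - replace (x^(S (S n))) with (x * x^(S n)) by reflexivity.
    replace (y^(S (S n))) with (y * y^(S n)) by reflexivity.
    assert (0 <= x^(S n)) by (apply pow_le; lra).
    nra.
Qed.

Lemma pow_inj_nonneg (x y : R) (n : nat) : 0 <= x -> 0 <= y -> x^(S n) = y^(S n) -> x = y.
Proof.
  intros Hx Hy H. destruct (Rtotal_order x y) as [Hlt|[Heq|Hgt]]; auto.
  - pose proof (pow_lt_strict x y n ltac:(lra)). lra.
  - pose proof (pow_lt_strict y x n ltac:(lra)). lra.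
Qed.

Lemma cv_const (c : R) : Un_cv (fun _ => c) c.
Proof. intros eps H. exists 0%nat. intros. unfold Rdist. rewrite Rminus_diag, Rabs_R0. lra. Qed.

Lemma cv_sub (u : nat -> R) (l : R) (phi : nat -> nat) : Un_cv u l -> (forall M, (M <= phi M)%nat) ->
  Un_cv (fun M => u (phi M)) l.
Proof.
  intros H Hphi eps Heps. destruct (H eps Heps) as [N HN]. exists N. intros n Hn.
  apply HN. specialize (Hphi n). lia.
Qed.

Lemma closed_ge0 (H : R -> R) (t : R) : continuity_pt H t ->
  (forall d, 0 < d -> exists y, t - d < y <= t /\ 0 <= H y) -> 0 <= H t.
Proof.
  intros Hc Happ. destruct (Rle_lt_dec 0 (H t)) as [|Hneg]; auto. exfalso.
  destruct (Hc (- H t) ltac:(lra)) as [d [Hd Hd']].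
  destruct (Happ d Hd) as [y [Hy1 Hy2]].
  destruct (Req_dec y t) as [->|Hne]; [lra|].
  assert (Hdist : Rdist (H y) (H t) < - H t).
  { apply Hd'. split.
    - unfold D_x, no_cond. split; auto.
    - simpl. unfold Rdist. rewrite Rabs_left1 by lra. lra. }
  unfold Rdist in Hdist. apply Rabs_def2 in Hdist. lra.
Qed.


Lemma RS_norm (g : R -> R) (G : R -> R) (k : nat) (s t h : R) (n : nat) :
  Rhaz G t - Rhaz G s <> 0 ->
  RS_sum_aux g (rec_cond_cdf G k s t) s h n =
  RS_sum_aux g (fun x => (Rhaz G x - Rhaz G s)^k) s h n / (Rhaz G t - Rhaz G s)^k.
Proof.
  intros Hne. assert (Hp : (Rhaz G t - Rhaz G s)^k <> 0) by (apply pow_nonzero; auto).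
  induction n as [|n IH].
  - simpl. unfold Rdiv. ring.
  - change (RS_sum_aux g (rec_cond_cdf G k s t) s h (S n)) with
      (RS_sum_aux g (rec_cond_cdf G k s t) s h n
       + g (s + INR n * h) * (rec_cond_cdf G k s t (s + INR (S n) * h) - rec_cond_cdf G k s t (s + INR n * h))).
    change (RS_sum_aux g (fun x => (Rhaz G x - Rhaz G s)^k) s h (S n)) with
      (RS_sum_aux g (fun x => (Rhaz G x - Rhaz G s)^k) s h n
       + g (s + INR n * h) * ((Rhaz G (s + INR (S n) * h) - Rhaz G s)^k - (Rhaz G (s + INR n * h) - Rhaz G s)^k)).
    rewrite IH. unfold rec_cond_cdf. unfold Rdiv. rewrite !Rpow_mult_distr, !pow_inv.
    field. auto.
Qed.

Lemma tail_bound (f F : R -> R) (a h lo hi : R) (P j : nat) :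
  (forall m, (P <= m < P + j)%nat -> lo <= f (a + INR m * h) <= hi /\
        F (a + INR m * h) <= F (a + INR (S m) * h)) ->
  lo * (F (a + INR (P + j) * h) - F (a + INR P * h)) <=
    RS_sum_aux f F a h (P + j) - RS_sum_aux f F a h P <=
  hi * (F (a + INR (P + j) * h) - F (a + INR P * h)).
Proof.
  intros H. induction j as [|j IH].
  - rewrite Nat.add_0_r. lra.
  - assert (IH' := IH (fun m Hm => H m ltac:(lia))).
    rewrite Nat.add_succ_r.
    change (RS_sum_aux f F a h (S (P + j))) with
      (RS_sum_aux f F a h (P + j) + f (a + INR (P + j) * h) * (F (a + INR (S (P + j)) * h) - F (a + INR (P + j) * h))).
    destruct (H (P + j)%nat ltac:(lia)) as [[H1 H2] H3].
    set (u := F (a + INR (S (P + j)) * h)) in *. set (u0 := F (a + INR (P + j) * h)) in *.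
    set (uP := F (a + INR P * h)) in *. set (fv := f (a + INR (P + j) * h)) in *.
    clearbody u u0 uP fv.
    assert (lo * (u - u0) <= fv * (u - u0)) by (apply Rmult_le_compat_r; lra).
    assert (fv * (u - u0) <= hi * (u - u0)) by (apply Rmult_le_compat_r; lra).
    lra.
Qed.


Lemma psi_alg (j:nat) (A1 A2 b1 b2 gs : R) : 0 < A1 <= A2 -> 0 <= b1 -> 0 <= b2 ->
  (A1 + gs) * (b2 - b1) <= b2 * ((INR (S j)*(A2+gs) + gs)/(INR (S j)+1)) - b1*((INR (S j)*(A1+gs)+gs)/(INR (S j)+1)) <= (A2+gs)*(b2 - b1) ->
  Rabs (b2/A2^(S j) - b1/A1^(S j)) <= (b1/A1^(S j) + b2/A2^(S j)) * (INR (S j))^2 * (A2-A1)^2 / A1^2.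
Proof.
  intros [HA1 HA12] Hb1 Hb2 [Hlo Hup].
  pose proof (tangent j A1 A2 ltac:(lra) ltac:(lra)) as T1.
  pose proof (tangent j A2 A1 ltac:(lra) ltac:(lra)) as T2.
  set (K := INR (S j)) in *.
  assert (HK : 0 < K) by (unfold K; apply lt_0_INR; lia).
  replace (A1^(S j)) with (A1 * A1^j) in * by reflexivity.
  replace (A2^(S j)) with (A2 * A2^j) in * by reflexivity.
  assert (HP1 : 0 < A1^j) by (apply pow_lt; lra).
  assert (HP2 : 0 < A2^j) by (apply pow_lt; lra).
  set (P1 := A1^j) in *. set (P2 := A2^j) in *. clearbody K P1 P2.
  set (d := A2 - A1).
  assert (Hmid : b2 * ((K*(A2+gs) + gs)/(K+1)) - b1*((K*(A1+gs)+gs)/(K+1)) =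
                 (K * (A2*b2 - A1*b1))/(K+1) + gs*(b2-b1)) by (field; lra).
  rewrite Hmid in Hlo, Hup.
  set (Y := K * (A2 * b2 - A1 * b1) / (K + 1)) in *.
  assert (HY : K * (A2 * b2 - A1 * b1) = (K+1) * Y) by (unfold Y; field; lra).
  clearbody Y.
  assert (L : b2 * (A1 - K*d) <= A1 * b1).
  { assert (H1: A1*(b2-b1) <= Y) by nra.
    assert (H: (K+1)*(A1*(b2-b1)) <= K*(A2*b2 - A1*b1)).
    { rewrite HY. apply Rmult_le_compat_l; lra. }
    unfold d. nra. }
  assert (U : b1 * (A2 + K*d) <= A2 * b2).
  { assert (H1: Y <= A2*(b2-b1)) by nra.
    assert (H: K*(A2*b2 - A1*b1) <= (K+1)*(A2*(b2-b1))).
    { rewrite HY. apply Rmult_le_compat_l; lra. }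
    unfold d. nra. }
  assert (I1 : b2 * (A1*P1) * (A1^2 - K^2*d^2) <= b1 * (A2*P2) * A1^2).
  { assert (X : 0 <= A1*P1*(A1 + K*d)).
    { apply Rmult_le_pos; [nra|]. unfold d. nra. }
    assert (Y0 : b2*(A1 - K*d) * (A1*P1*(A1 + K*d)) <= A1*b1*(A1*P1*(A1 + K*d)))
      by (apply Rmult_le_compat_r; auto).
    assert (Z : P1*(A1 + K*d) <= A2*P2).
    { unfold d. lra. }
    assert (W : A1*b1*(A1*P1*(A1 + K*d)) <= A1*b1*(A1*(A2*P2))).
    { replace (A1*P1*(A1 + K*d)) with (A1*(P1*(A1 + K*d))) by ring.
      apply Rmult_le_compat_l; [nra|]. apply Rmult_le_compat_l; lra. }
    replace (b2 * (A1 * P1) * (A1 ^ 2 - K ^ 2 * d ^ 2)) with (b2*(A1 - K*d) * (A1*P1*(A1 + K*d))) by ring.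
    replace (b1 * (A2 * P2) * A1 ^ 2) with (A1*b1*(A1*(A2*P2))) by ring.
    lra. }
  assert (I2 : b1 * (A2*P2) * (A2^2 - K^2*d^2) <= b2 * (A1*P1) * A2^2).
  { replace (b1 * (A2*P2) * (A2^2 - K^2*d^2)) with ((b1*(A2 + K*d)) * (A2*P2*(A2 - K*d))) by ring.
    destruct (Rle_lt_dec 0 (A2 - K*d)) as [Hp|Hn].
    - assert (X : 0 <= A2*P2*(A2 - K*d)) by (apply Rmult_le_pos; nra).
      assert (Y0 : b1*(A2 + K*d) * (A2*P2*(A2 - K*d)) <= A2*b2 * (A2*P2*(A2 - K*d)))
        by (apply Rmult_le_compat_r; auto).
      assert (Z : P2*(A2 - K*d) <= A1*P1).
      { unfold d. lra. }
      assert (W : A2*b2 * (A2*(P2*(A2 - K*d))) <= A2*b2*(A2*(A1*P1))).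
      { apply Rmult_le_compat_l; [nra|]. apply Rmult_le_compat_l; lra. }
      replace (A2*b2 * (A2*P2*(A2 - K*d))) with (A2*b2 * (A2*(P2*(A2 - K*d)))) in Y0 by ring.
      replace (b2 * (A1 * P1) * A2 ^ 2) with (A2*b2*(A2*(A1*P1))) by ring.
      lra.
    - assert (X : A2*P2*(A2 - K*d) <= 0).
      { assert (0 <= A2 * P2) by nra. nra. }
      assert (0 <= b1*(A2 + K*d)) by (apply Rmult_le_pos; unfold d; nra).
      assert (0 <= b2 * (A1 * P1) * A2 ^ 2) by (apply Rmult_le_pos; [apply Rmult_le_pos|]; nra).
      nra. }
  set (Q1 := b1 / (A1 * P1)). set (Q2 := b2 / (A2 * P2)).
  assert (Hb1e : b1 = Q1 * (A1*P1)) by (unfold Q1; field; nra).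
  assert (Hb2e : b2 = Q2 * (A2*P2)) by (unfold Q2; field; nra).
  assert (HQ1 : 0 <= Q1) by (unfold Q1; apply Rmult_le_pos; [lra| left; apply Rinv_0_lt_compat; nra]).
  assert (HQ2 : 0 <= Q2) by (unfold Q2; apply Rmult_le_pos; [lra| left; apply Rinv_0_lt_compat; nra]).
  clearbody Q1 Q2. subst b1 b2.
  assert (HPP : 0 < (A1*P1) * (A2*P2)) by (repeat apply Rmult_lt_0_compat; lra).
  assert (I1' : Q2 * (A1^2 - K^2*d^2) <= Q1 * A1^2).
  { apply (Rmult_le_reg_r ((A1*P1) * (A2*P2))); [exact HPP|].
    replace (Q2 * (A1 ^ 2 - K ^ 2 * d ^ 2) * (A1 * P1 * (A2 * P2))) with (Q2 * (A2 * P2) * (A1 * P1) * (A1 ^ 2 - K ^ 2 * d ^ 2)) by ring.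
    replace (Q1 * A1 ^ 2 * (A1 * P1 * (A2 * P2))) with (Q1 * (A1 * P1) * (A2 * P2) * A1 ^ 2) by ring.
    exact I1. }
  assert (I2' : Q1 * (A2^2 - K^2*d^2) <= Q2 * A2^2).
  { apply (Rmult_le_reg_r ((A1*P1) * (A2*P2))); [exact HPP|].
    replace (Q1 * (A2 ^ 2 - K ^ 2 * d ^ 2) * (A1 * P1 * (A2 * P2))) with (Q1 * (A1 * P1) * (A2 * P2) * (A2 ^ 2 - K ^ 2 * d ^ 2)) by ring.
    replace (Q2 * A2 ^ 2 * (A1 * P1 * (A2 * P2))) with (Q2 * (A2 * P2) * (A1 * P1) * A2 ^ 2) by ring.
    exact I2. }
  replace (Q2 * (A2 * P2) / (A2 * P2)) with Q2 by (field; nra).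
  replace (Q1 * (A1 * P1) / (A1 * P1)) with Q1 by (field; nra).
  fold d.
  assert (HA1s : 0 < A1^2) by nra.
  assert (HKd : 0 <= K^2 * d^2) by nra.
  assert (E1 : Q2 - Q1 <= Q2 * K^2 * d^2 / A1^2).
  { apply (Rmult_le_reg_r (A1^2)); [lra|].
    replace (Q2 * K ^ 2 * d ^ 2 / A1 ^ 2 * A1 ^ 2) with (Q2 * K^2 * d^2) by (field; lra). nra. }
  assert (E2 : Q1 - Q2 <= Q1 * K^2 * d^2 / A1^2).
  { assert (Q1 - Q2 <= Q1 * K^2 * d^2 / A2^2).
    { apply (Rmult_le_reg_r (A2^2)); [nra|].
      replace (Q1 * K ^ 2 * d ^ 2 / A2 ^ 2 * A2 ^ 2) with (Q1 * K^2 * d^2) by (field; nra). nra. }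
    assert (Q1 * K^2 * d^2 / A2^2 <= Q1 * K^2 * d^2 / A1^2).
    { unfold Rdiv. apply Rmult_le_compat_l; [nra|]. apply Rinv_le_contravar; [lra|]. nra. }
    lra. }
  assert (E3 : 0 <= Q1 * K^2 * d^2 / A1^2) by (apply Rmult_le_pos; [nra| left; apply Rinv_0_lt_compat; lra]).
  assert (E4 : 0 <= Q2 * K^2 * d^2 / A1^2) by (apply Rmult_le_pos; [nra| left; apply Rinv_0_lt_compat; lra]).
  replace ((Q1 + Q2) * K ^ 2 * d ^ 2 / A1 ^ 2) with (Q1 * K^2 * d^2 / A1^2 + Q2 * K^2 * d^2 / A1^2) by (field; lra).
  apply Rabs_le. lra.
Qed.



Lemma cpt_mult (f1 f2 : R -> R) x : continuity_pt f1 x -> continuity_pt f2 x -> continuity_pt (fun y => f1 y * f2 y) x.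
Proof. intros. exact (continuity_pt_mult f1 f2 x H H0). Qed.
Lemma cpt_plus (f1 f2 : R -> R) x : continuity_pt f1 x -> continuity_pt f2 x -> continuity_pt (fun y => f1 y + f2 y) x.
Proof. intros. exact (continuity_pt_plus f1 f2 x H H0). Qed.
Lemma cpt_minus (f1 f2 : R -> R) x : continuity_pt f1 x -> continuity_pt f2 x -> continuity_pt (fun y => f1 y - f2 y) x.
Proof. intros. exact (continuity_pt_minus f1 f2 x H H0). Qed.
Lemma cpt_const (c : R) x : continuity_pt (fun _ => c) x.
Proof. apply continuity_pt_const. intros ? ?; reflexivity. Qed.

Lemma small_zero (x M : R) : 0 <= M -> (forall eta, 0 < eta -> Rabs x <= eta * M) -> x = 0.
Proof.
  intros HM H. destruct (Req_dec x 0) as [|Hne]; auto. exfalso.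
  assert (Hx : 0 < Rabs x) by (apply Rabs_pos_lt; auto).
  specialize (H (Rabs x / (2 * M + 2)) ltac:(apply Rdiv_lt_0_compat; lra)).
  assert (Rabs x / (2 * M + 2) * M < Rabs x).
  { apply (Rmult_lt_reg_r (2*M+2)); [lra|].
    replace (Rabs x / (2 * M + 2) * M * (2 * M + 2)) with (Rabs x * M) by (field; lra). nra. }
  lra.
Qed.

Section Forward.
Variables (G g : R -> R) (k : nat).
Hypothesis HG : is_cont_dist_fun G.
Hypothesis Hk : (1 <= k)%nat.
Hypothesis Hgc : forall y, in_supp G y -> continuity_pt g y.
Hypothesis Hgi : forall x y, in_supp G x -> in_supp G y -> x < y -> g x < g y.
Hypothesis Hcond : forall s t, in_supp G s -> in_supp G t -> s < t -> G s < G t ->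
      cond_exp_rec G g k s t ((INR k * g t + g s) / (INR k + 1)).
Variable s : R.
Hypothesis Hs : in_supp G s.

Definition bf x := (Rhaz G x - Rhaz G s)^k.
Definition vv t := (INR k * g t + g s) / (INR k + 1).
Definition Ts t := in_supp G t /\ G s < G t.

Lemma Gm : forall x y, x <= y -> G x <= G y.
Proof. destruct HG as [H _]. exact H. Qed.

Lemma Ts_gt t : Ts t -> s < t.
Proof.
  intros [_ H]. destruct (Rlt_le_dec s t) as [|Hle]; auto.
  pose proof (Gm _ _ Hle). lra.
Qed.

Lemma cv_bf t : Ts t -> Un_cv (fun N => RS_sum_aux g bf s ((t-s)/INR(S N)) (S N)) (bf t * vv t).
Proof.
  intros [Ht HGt].
  pose proof (Ts_gt t (conj Ht HGt)) as Hst.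
  pose proof (Hcond s t Hs Ht Hst HGt) as Hc. unfold cond_exp_rec in Hc.
  pose proof (Rhaz_lt G s t Hs Ht HGt) as HR.
  assert (Hne : Rhaz G t - Rhaz G s <> 0) by lra.
  assert (Hbf : bf t <> 0) by (unfold bf; apply pow_nonzero; auto).
  pose proof (CV_mult _ _ _ _ Hc (cv_const (bf t))) as Hm.
  rewrite Rmult_comm in Hm.
  eapply Un_cv_ext; [|exact Hm].
  intros N. unfold RS_seq. rewrite RS_norm by auto. unfold bf.
  field. apply pow_nonzero; auto.
Qed.

Lemma bf_nonneg x : in_supp G x -> s <= x -> 0 <= bf x.
Proof.
  intros Hx H. unfold bf. apply pow_le.
  pose proof (Rhaz_le G s x Hs Hx (Gm _ _ H)). lra.
Qed.

Lemma bf_mono x y : in_supp G x -> in_supp G y -> s <= x -> x <= y -> bf x <= bf y.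
Proof.
  intros Hx Hy H1 H2. unfold bf. apply pow_incr.
  pose proof (Rhaz_le G s x Hs Hx (Gm _ _ H1)).
  pose proof (Rhaz_le G x y Hx Hy (Gm _ _ H2)). lra.
Qed.

Lemma grid_pos (h0 : R) (p M m : nat) : 0 < h0 -> (p * S M <= m)%nat ->
  INR p * h0 <= INR m * (h0 / INR (S M)).
Proof.
  intros Hh Hm. assert (HS : 0 < INR (S M)) by (apply lt_0_INR; lia).
  apply le_INR in Hm. rewrite mult_INR in Hm.
  replace (INR p * h0) with ((INR p * INR (S M)) * (h0 / INR (S M))) by (field; lra).
  apply Rmult_le_compat_r; [|lra]. unfold Rdiv. apply Rmult_le_pos; [lra|left; apply Rinv_0_lt_compat; lra].
Qed.

Lemma grid_pos' (h0 : R) (p M m : nat) : 0 < h0 -> (m <= p * S M)%nat ->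
  INR m * (h0 / INR (S M)) <= INR p * h0.
Proof.
  intros Hh Hm. assert (HS : 0 < INR (S M)) by (apply lt_0_INR; lia).
  apply le_INR in Hm. rewrite mult_INR in Hm.
  replace (INR p * h0) with ((INR p * INR (S M)) * (h0 / INR (S M))) by (field; lra).
  apply Rmult_le_compat_r; [|lra]. unfold Rdiv. apply Rmult_le_pos; [lra|left; apply Rinv_0_lt_compat; lra].
Qed.

Lemma grid_eq (h0 : R) (p M : nat) : INR (p * S M) * (h0 / INR (S M)) = INR p * h0.
Proof.
  assert (HS : 0 < INR (S M)) by (apply lt_0_INR; lia).
  rewrite mult_INR. field. lra.
Qed.

Lemma cvW (p : nat) (h0 : R) : (1 <= p)%nat -> 0 < h0 -> Ts (s + INR p * h0) ->
  Un_cv (fun M => RS_sum_aux g bf s (h0 / INR (S M)) (p * S M))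
        (bf (s + INR p * h0) * vv (s + INR p * h0)).
Proof.
  intros Hp Hh Ht.
  assert (Hphi : forall M, (M <= p * S M - 1)%nat).
  { intro M. destruct p as [|p']; [lia|]. simpl. lia. }
  pose proof (cv_sub _ _ (fun M => (p * S M - 1)%nat) (cv_bf _ Ht) Hphi) as H.
  eapply Un_cv_ext; [|exact H]. intros M. cbv beta.
  replace (S (p * S M - 1)) with (p * S M)%nat by (destruct p as [|p']; [lia|]; simpl; lia).
  f_equal. replace (s + INR p * h0 - s) with (INR p * h0) by ring.
  rewrite mult_INR. assert (0 < INR (S M)) by (apply lt_0_INR; lia).
  assert (0 < INR p) by (apply lt_0_INR; lia). field. lra.
Qed.

Lemma align (p q : nat) (h0 : R) : (1 <= p)%nat -> (p < q)%nat -> 0 < h0 ->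
  Ts (s + INR p * h0) -> in_supp G (s + INR q * h0) ->
  g (s + INR p * h0) * (bf (s + INR q * h0) - bf (s + INR p * h0)) <=
    bf (s + INR q * h0) * vv (s + INR q * h0) - bf (s + INR p * h0) * vv (s + INR p * h0) <=
  g (s + INR q * h0) * (bf (s + INR q * h0) - bf (s + INR p * h0)).
Proof.
  intros Hp Hpq Hh Ht1 Ht2s.
  set (t1 := s + INR p * h0) in *. set (t2 := s + INR q * h0) in *.
  assert (Ht12 : t1 < t2).
  { unfold t1, t2. assert (INR p < INR q) by (apply lt_INR; lia). nra. }
  pose proof (Ts_gt _ Ht1) as Hst1.
  destruct Ht1 as [Ht1s HGt1].
  assert (Ht2 : Ts t2) by (split; auto; pose proof (Gm t1 t2 ltac:(lra)); lra).
  pose proof (cvW p h0 Hp Hh (conj Ht1s HGt1)) as C1.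
  pose proof (cvW q h0 ltac:(lia) Hh Ht2) as C2.
  fold t1 in C1. fold t2 in C2.
  pose proof (CV_minus _ _ _ _ C2 C1) as C.
  assert (Hb : forall M, g t1 * (bf t2 - bf t1) <=
     RS_sum_aux g bf s (h0 / INR (S M)) (q * S M) - RS_sum_aux g bf s (h0 / INR (S M)) (p * S M)
     <= g t2 * (bf t2 - bf t1)).
  { intros M.
    replace (q * S M)%nat with (p * S M + (q - p) * S M)%nat by nia.
    assert (Hin : forall m, (p * S M <= m <= q * S M)%nat ->
       t1 <= s + INR m * (h0 / INR (S M)) <= t2 /\ in_supp G (s + INR m * (h0 / INR (S M)))).
    { intros m Hm. assert (t1 <= s + INR m * (h0 / INR (S M)) <= t2).
      { unfold t1, t2. split.
        - pose proof (grid_pos h0 p M m Hh ltac:(lia)). lra.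
        - pose proof (grid_pos' h0 q M m Hh ltac:(lia)). lra. }
      split; auto. apply (supp_between G t1 _ t2); [exact Gm|..]; auto. }
    pose proof (tail_bound g bf s (h0 / INR (S M)) (g t1) (g t2) (p * S M) ((q - p) * S M)) as TB.
    replace (s + INR (p * S M + (q - p) * S M) * (h0 / INR (S M))) with t2 in TB.
    2:{ replace (p * S M + (q - p) * S M)%nat with (q * S M)%nat by nia. rewrite grid_eq. reflexivity. }
    replace (s + INR (p * S M) * (h0 / INR (S M))) with t1 in TB by (rewrite grid_eq; reflexivity).
    apply TB. intros m Hm.
    destruct (Hin m ltac:(nia)) as [[Hm1 Hm2] Hms].
    destruct (Hin (S m) ltac:(nia)) as [[HSm1 HSm2] HSms].
    split; [split|].
    - apply (g_le G g); auto.
    - apply (g_le G g); auto.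
    - apply bf_mono; auto; [lra|]. rewrite (S_INR m).
      assert (0 < h0 / INR (S M)) by (apply Rdiv_lt_0_compat; [lra| apply lt_0_INR; lia]). nra. }
  split.
  - apply (Rle_cv_lim (Un := fun _ => g t1 * (bf t2 - bf t1))
                      (Vn := fun M => RS_sum_aux g bf s (h0 / INR (S M)) (q * S M) - RS_sum_aux g bf s (h0 / INR (S M)) (p * S M))).
    + intros M. apply Hb.
    + apply cv_const.
    + exact C.
  - apply (Rle_cv_lim (Vn := fun _ => g t2 * (bf t2 - bf t1))
                      (Un := fun M => RS_sum_aux g bf s (h0 / INR (S M)) (q * S M) - RS_sum_aux g bf s (h0 / INR (S M)) (p * S M))).
    + intros M. apply Hb.
    + exact C.
    + apply cv_const.
Qed.


Lemma ineq_all t1 t2 : Ts t1 -> in_supp G t2 -> t1 < t2 ->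
  g t1 * (bf t2 - bf t1) <= bf t2 * vv t2 - bf t1 * vv t1 <= g t2 * (bf t2 - bf t1).
Proof.
  intros Ht1 Ht2 H12.
  pose proof (Ts_gt _ Ht1) as Hst1.
  assert (approx : forall d, 0 < d -> exists y, t2 - d < y <= t2 /\
     g t1 * (bf y - bf t1) <= bf y * vv y - bf t1 * vv t1 <= g y * (bf y - bf t1)).
  { intros d Hd.
    set (m := Rmin d (t2 - t1)).
    assert (Hm : 0 < m) by (unfold m; apply Rmin_pos; lra).
    assert (Hmd : m <= d) by apply Rmin_l.
    assert (Hm12 : m <= t2 - t1) by apply Rmin_r.
    destruct (archimed_cor1 (m / (t1 - s)) ltac:(apply Rdiv_lt_0_compat; lra)) as [n [Hn Hnp]].
    assert (HnR : 0 < INR n) by (apply lt_0_INR; lia).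
    set (h0 := (t1 - s) / INR n).
    assert (Hh0 : 0 < h0) by (unfold h0; apply Rdiv_lt_0_compat; lra).
    assert (Hh0m : h0 < m).
    { unfold h0, Rdiv. replace m with ((t1 - s) * (m / (t1 - s))) by (field; lra).
      apply Rmult_lt_compat_l; lra. }
    destruct (maxN (a:=s) (b:=t2) (mkposreal h0 Hh0) ltac:(lra)) as [q [Hq1 Hq2]]. change (pos (mkposreal h0 Hh0)) with h0 in Hq1, Hq2.
    assert (Ht1e : t1 = s + INR n * h0) by (unfold h0; field; lra).
    rewrite S_INR in Hq2.
    assert (Hnq : INR n < INR q) by nra.
    apply INR_lt in Hnq.
    assert (Hy1 : t1 < s + INR q * h0).
    { rewrite Ht1e. assert (INR n < INR q) by (apply lt_INR; lia). nra. }
    exists (s + INR q * h0). split; [lra|].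
    assert (Hys : in_supp G (s + INR q * h0)).
    { apply (supp_between G t1 _ t2); [exact Gm|destruct Ht1; auto|auto|lra]. }
    rewrite Ht1e. rewrite Ht1e in Ht1.
    apply align; auto. }
  assert (Cg : continuity_pt g t2) by auto.
  assert (Cb : continuity_pt bf t2) by (unfold bf; apply bf_cont; auto; destruct HG as [_ [H _]]; exact H).
  split.
  - set (H := fun t => bf t * vv t - bf t1 * vv t1 - g t1 * (bf t - bf t1)).
    assert (0 <= H t2).
    { apply closed_ge0.
      - unfold H, vv. apply cpt_minus; [apply cpt_minus|apply cpt_mult]; try apply cpt_const.
        + apply cpt_mult; auto. unfold Rdiv. apply cpt_mult; [|apply cpt_const].
          apply cpt_plus; [apply cpt_mult; [apply cpt_const|auto]|apply cpt_const].
        + apply cpt_minus; auto; apply cpt_const.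
      - intros d Hd. destruct (approx d Hd) as [y [Hy1 Hy2]]. exists y. split; auto. unfold H. lra. }
    unfold H in H0. lra.
  - set (H := fun t => g t * (bf t - bf t1) - (bf t * vv t - bf t1 * vv t1)).
    assert (0 <= H t2).
    { apply closed_ge0.
      - unfold H, vv. apply cpt_minus; [apply cpt_mult|apply cpt_minus]; try apply cpt_const; auto.
        + apply cpt_minus; auto; apply cpt_const.
        + apply cpt_mult; auto. unfold Rdiv. apply cpt_mult; [|apply cpt_const].
          apply cpt_plus; [apply cpt_mult; [apply cpt_const|auto]|apply cpt_const].
      - intros d Hd. destruct (approx d Hd) as [y [Hy1 Hy2]]. exists y. split; auto. unfold H. lra. }
    unfold H in H0. lra.
Qed.


Definition AA t := g t - g s.
Definition Psi t := bf t / (AA t)^k.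

Lemma psi_step y y' : Ts y -> in_supp G y' -> y < y' ->
  Rabs (Psi y' - Psi y) <= (Psi y + Psi y') * (INR k)^2 * (AA y' - AA y)^2 / (AA y)^2.
Proof.
  intros Hy Hy' H.
  pose proof (ineq_all y y' Hy Hy' H) as [I1 I2].
  pose proof (Ts_gt _ Hy) as Hsy.
  destruct Hy as [Hys HGy].
  assert (HA : 0 < AA y) by (unfold AA; pose proof (Hgi s y Hs Hys Hsy); lra).
  assert (HA' : AA y <= AA y') by (unfold AA; pose proof (Hgi y y' Hys Hy' H); lra).
  assert (Hb : 0 <= bf y) by (apply bf_nonneg; auto; lra).
  assert (Hb' : 0 <= bf y') by (apply bf_nonneg; auto; lra).
  unfold vv in I1, I2.
  replace (g y) with (AA y + g s) in I1, I2 by (unfold AA; ring).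
  replace (g y') with (AA y' + g s) in I1, I2 by (unfold AA; ring).
  unfold Psi. clear Hcond.
  set (a1 := AA y) in *. set (a2 := AA y') in *. set (b1 := bf y) in *. set (b2 := bf y') in *.
  clearbody a1 a2 b1 b2.
  destruct k as [|j]; [lia|].
  apply (psi_alg j a1 a2 b1 b2 (g s)); auto.
Qed.

Lemma psi_const lo hi : Ts lo -> in_supp G hi -> lo < hi -> Psi lo = Psi hi.
Proof.
  intros Hlo Hhi H.
  pose proof (Ts_gt _ Hlo) as Hslo.
  destruct Hlo as [Hlos HGlo].
  assert (Hins : forall y, lo <= y <= hi -> in_supp G y).
  { intros y Hy. apply (supp_between G lo y hi); auto. exact Gm. }
  assert (HTs : forall y, lo <= y <= hi -> Ts y).
  { intros y Hy. split; auto. pose proof (Gm lo y ltac:(lra)). lra. }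
  set (a0 := AA lo).
  assert (Ha0 : 0 < a0) by (unfold a0, AA; pose proof (Hgi s lo Hs Hlos Hslo); lra).
  assert (HAy : forall y, lo <= y <= hi -> a0 <= AA y).
  { intros y Hy. unfold a0, AA. pose proof (g_le G g lo y Hgi Hlos (Hins y Hy) ltac:(lra)). lra. }
  set (Pm := bf hi / a0^k).
  assert (Hpk : 0 < a0^k) by (apply pow_lt; lra).
  assert (HPsi : forall y, lo <= y <= hi -> 0 <= Psi y <= Pm).
  { intros y Hy. pose proof (HAy y Hy) as Ha.
    assert (Hb : 0 <= bf y) by (apply bf_nonneg; [apply Hins; lra|lra]).
    assert (Hb2 : bf y <= bf hi) by (apply bf_mono; [apply Hins; lra|auto|lra|lra]).
    assert (Hk2 : a0^k <= (AA y)^k) by (apply pow_incr; lra).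
    unfold Psi, Pm. split.
    - unfold Rdiv. apply Rmult_le_pos; auto. left. apply Rinv_0_lt_compat. lra.
    - unfold Rdiv. apply Rmult_le_compat; auto.
      + left. apply Rinv_0_lt_compat. lra.
      + apply Rinv_le_contravar; lra. }
  set (K := INR k).
  set (C := 2 * Pm * K^2 / a0^2).
  assert (HC : 0 <= C).
  { unfold C. assert (0 <= Pm) by (pose proof (HPsi hi ltac:(lra)); lra).
    unfold Rdiv. apply Rmult_le_pos; [|left; apply Rinv_0_lt_compat; nra].
    apply Rmult_le_pos; [lra|]. apply pow2_ge_0. }
  assert (Hstep : forall y y', lo <= y -> y < y' -> y' <= hi ->
            Rabs (Psi y' - Psi y) <= C * (AA y' - AA y)^2).
  { intros y y' H1 H2 H3.
    pose proof (psi_step y y' (HTs y ltac:(lra)) (Hins y' ltac:(lra)) H2) as PS.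
    eapply Rle_trans; [exact PS|].
    pose proof (HPsi y ltac:(lra)). pose proof (HPsi y' ltac:(lra)).
    pose proof (HAy y ltac:(lra)).
    fold K. unfold C.
    assert (Hd : 0 <= K^2 * (AA y' - AA y)^2) by (apply Rmult_le_pos; apply pow2_ge_0).
    replace ((Psi y + Psi y') * K ^ 2 * (AA y' - AA y) ^ 2 / AA y ^ 2)
      with ((Psi y + Psi y') * (K ^ 2 * (AA y' - AA y) ^ 2) / AA y ^ 2) by (field; lra).
    replace (2 * Pm * K ^ 2 / a0 ^ 2 * (AA y' - AA y) ^ 2)
      with ((2 * Pm) * (K ^ 2 * (AA y' - AA y) ^ 2) / a0 ^ 2) by (field; lra).
    unfold Rdiv. apply Rmult_le_compat.
    - apply Rmult_le_pos; lra.
    - left. apply Rinv_0_lt_compat. nra.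
    - apply Rmult_le_compat_r; lra.
    - apply Rinv_le_contravar; nra. }
  assert (Hsmall : forall eta, 0 < eta -> Rabs (Psi hi - Psi lo) <= eta * (C * (AA hi - AA lo))).
  { intros eta Heta.
    destruct (Heine_cor1 (f:=g) H) with (eps := mkposreal _ Heta) as [delta [_ Hdel]].
    { intros x Hx. apply Hgc. apply Hins. auto. }
    simpl in Hdel.
    assert (Hdp : 0 < delta / (hi - lo)) by (apply Rdiv_lt_0_compat; [apply cond_pos | lra]).
    destruct (archimed_cor1 _ Hdp) as [N0 [HN0 HN0p]].
    set (h := (hi - lo) / INR (S N0)).
    assert (HSN: 0 < INR (S N0)) by (apply lt_0_INR; lia).
    assert (Hh : 0 < h) by (unfold h; apply Rdiv_lt_0_compat; lra).
    assert (Hhd : h < delta).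
    { unfold h. assert (HN0r: 0 < INR N0) by (apply lt_0_INR; lia).
      assert (INR N0 <= INR (S N0)) by (apply le_INR; lia).
      assert (/ INR (S N0) <= / INR N0) by (apply Rinv_le_contravar; lra).
      assert (Hds: 0 < delta) by apply cond_pos.
      apply Rle_lt_trans with ((hi - lo) * / INR N0).
      - unfold Rdiv. apply Rmult_le_compat_l; lra.
      - replace (pos delta) with ((hi - lo) * (delta / (hi - lo))) by (field; lra).
        apply Rmult_lt_compat_l; lra. }
    assert (Hind : forall m, (m <= S N0)%nat ->
       Rabs (Psi (lo + INR m * h) - Psi lo) <= eta * (C * (AA (lo + INR m * h) - AA lo))).
    { induction m as [|m IH]; intros Hm.
      - simpl. replace (lo + 0 * h) with lo by ring. rewrite Rminus_diag, Rabs_R0. lra.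
      - pose proof (IH ltac:(lia)) as IH'.
        pose proof (grid_in lo hi N0 m H ltac:(lia)) as Gm1. fold h in Gm1.
        pose proof (grid_in lo hi N0 (S m) H Hm) as Gm2. fold h in Gm2.
        assert (Hlt : lo + INR m * h < lo + INR (S m) * h) by (rewrite (S_INR m); lra).
        pose proof (Hstep (lo + INR m * h) (lo + INR (S m) * h) ltac:(lra) Hlt ltac:(lra)) as St.
        assert (Hd : Rabs ((lo + INR (S m) * h) - (lo + INR m * h)) < delta).
        { rewrite (S_INR m). replace (lo + (INR m + 1) * h - (lo + INR m * h)) with h by ring.
          rewrite Rabs_right; lra. }
        pose proof (Hdel _ _ Gm2 Gm1 Hd) as Hgd.
        assert (Hmono : AA (lo + INR m * h) <= AA (lo + INR (S m) * h)).
        { unfold AA. pose proof (g_le G g _ _ Hgi (Hins _ Gm1) (Hins _ Gm2) ltac:(lra)). lra. }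
        assert (Hgd' : AA (lo + INR (S m) * h) - AA (lo + INR m * h) < eta).
        { unfold AA in *. rewrite Rabs_right in Hgd by lra. lra. }
        assert (Hdd0 : 0 <= AA (lo + INR (S m) * h) - AA (lo + INR m * h)) by lra.
        set (dd := AA (lo + INR (S m) * h) - AA (lo + INR m * h)) in *.
        assert (C * dd^2 <= eta * (C * dd)).
        { replace (C * dd^2) with (C * dd * dd) by ring.
          replace (eta * (C * dd)) with (C * dd * eta) by ring.
          apply Rmult_le_compat_l; [apply Rmult_le_pos; lra| lra]. }
        replace (Psi (lo + INR (S m) * h) - Psi lo) with
          ((Psi (lo + INR (S m) * h) - Psi (lo + INR m * h)) + (Psi (lo + INR m * h) - Psi lo)) by ring.
        eapply Rle_trans; [apply Rabs_triang|].
        unfold dd in *. nra. }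
    specialize (Hind (S N0) ltac:(lia)).
    replace (lo + INR (S N0) * h) with hi in Hind by (unfold h; field; lra).
    exact Hind. }
  assert (HM : 0 <= C * (AA hi - AA lo)).
  { apply Rmult_le_pos; auto. unfold AA. pose proof (Hgi lo hi Hlos Hhi H). lra. }
  pose proof (small_zero _ _ HM Hsmall). lra.
Qed.


Lemma mu_exists : exists mu, forall t, Ts t -> Rhaz G t - Rhaz G s = mu * (g t - g s).
Proof.
  pose proof Hs as [Hs1 Hs2].
  destruct (G_surj G ((G s + 1)/2) HG ltac:(lra)) as [t0 Ht0].
  assert (HT0 : Ts t0) by (unfold Ts, in_supp; lra).
  pose proof (Ts_gt _ HT0) as Hst0.
  assert (HA0 : 0 < AA t0) by (unfold AA; pose proof (Hgi s t0 Hs (proj1 HT0) Hst0); lra).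
  exists ((Rhaz G t0 - Rhaz G s) / AA t0).
  intros t Ht.
  pose proof (Ts_gt _ Ht) as Hst.
  assert (HA : 0 < AA t) by (unfold AA; pose proof (Hgi s t Hs (proj1 Ht) Hst); lra).
  assert (Hpsi : Psi t = Psi t0).
  { destruct (Rtotal_order t t0) as [Hlt|[Heq|Hgt]].
    - apply psi_const; auto. apply HT0.
    - subst; reflexivity.
    - symmetry. apply psi_const; auto. apply Ht. }
  assert (Hform : forall u, 0 < AA u -> Psi u = ((Rhaz G u - Rhaz G s) / AA u)^k).
  { intros u Hu. unfold Psi, bf, Rdiv. rewrite Rpow_mult_distr, pow_inv. reflexivity. }
  rewrite (Hform t HA), (Hform t0 HA0) in Hpsi.
  assert (HB : 0 <= Rhaz G t - Rhaz G s).
  { pose proof (Rhaz_le G s t Hs (proj1 Ht) (Gm s t ltac:(lra))). lra. }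
  assert (HB0 : 0 <= Rhaz G t0 - Rhaz G s).
  { pose proof (Rhaz_le G s t0 Hs (proj1 HT0) (Gm s t0 ltac:(lra))). lra. }
  destruct k as [|j]; [lia|].
  apply pow_inj_nonneg in Hpsi.
  - rewrite <- Hpsi. unfold AA. field. unfold AA in HA. lra.
  - unfold Rdiv. apply Rmult_le_pos; [lra| left; apply Rinv_0_lt_compat; lra].
  - unfold Rdiv. apply Rmult_le_pos; [lra| left; apply Rinv_0_lt_compat; lra].
Qed.

End Forward.

Lemma Rhaz_small (G : R -> R) y : in_supp G y -> G y <= 1/2 -> Rhaz G y <= 2 * G y.
Proof.
  intros [H1 H2] Hh. unfold Rhaz.
  rewrite <- ln_Rinv by lra.
  rewrite <- (ln_exp (2 * G y)).
  apply ln_le'. { apply Rinv_0_lt_compat. lra. }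
  apply Rle_trans with (1 + 2 * G y); [|apply exp_ineq1_le].
  apply (Rmult_le_reg_r (1 - G y)); [lra|].
  rewrite Rinv_l by lra. nra.
Qed.

Lemma forward (G g : R -> R) (k : nat) (gl : R) :
  is_cont_dist_fun G -> (1 <= k)%nat ->
  (forall y, in_supp G y -> continuity_pt g y) ->
  (forall x y, in_supp G x -> in_supp G y -> x < y -> g x < g y) ->
  (forall eps, eps > 0 -> exists y0, in_supp G y0 /\
     forall y, in_supp G y -> y < y0 -> Rabs (g y - gl) < eps) ->
  (forall s t, in_supp G s -> in_supp G t -> s < t -> G s < G t ->
      cond_exp_rec G g k s t ((INR k * g t + g s) / (INR k + 1))) ->
  exists c, c > 0 /\ forall y, in_supp G y -> G y = 1 - exp (- c * (g y - gl)).
Proof.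
  intros HG Hk Hgc Hgi Hgl Hcond.
  pose proof (Gm G HG) as Gmo.
  assert (Hlt : forall x y, G x < G y -> x < y).
  { intros x y H. destruct (Rlt_le_dec x y) as [|Hle]; auto. pose proof (Gmo _ _ Hle). lra. }
  destruct (G_surj G (1/2) HG ltac:(lra)) as [s0 Hs0].
  destruct (G_surj G (3/4) HG ltac:(lra)) as [u1 Hu1].
  destruct (G_surj G (7/8) HG ltac:(lra)) as [u2 Hu2].
  assert (Hs0s : in_supp G s0) by (unfold in_supp; lra).
  assert (Hu1s : in_supp G u1) by (unfold in_supp; lra).
  assert (Hu2s : in_supp G u2) by (unfold in_supp; lra).
  assert (Hsu1 : s0 < u1) by (apply Hlt; lra).
  assert (Hu12 : u1 < u2) by (apply Hlt; lra).
  destruct (mu_exists G g k HG Hk Hgc Hgi Hcond s0 Hs0s) as [mu Hmu].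
  assert (Hmu1 : Rhaz G u1 - Rhaz G s0 = mu * (g u1 - g s0)) by (apply Hmu; split; auto; lra).
  assert (Hmu2 : Rhaz G u2 - Rhaz G s0 = mu * (g u2 - g s0)) by (apply Hmu; split; auto; lra).
  assert (Hmupos : mu > 0).
  { pose proof (Rhaz_lt G s0 u1 Hs0s Hu1s ltac:(lra)).
    pose proof (Hgi s0 u1 Hs0s Hu1s Hsu1). nra. }
  assert (Haff : forall y, in_supp G y -> Rhaz G y = Rhaz G s0 + mu * (g y - g s0)).
  { intros y Hy. destruct (Rlt_le_dec (G s0) (G y)) as [Hgt|Hle].
    - assert (Rhaz G y - Rhaz G s0 = mu * (g y - g s0)) by (apply Hmu; split; auto). lra.
    - destruct (mu_exists G g k HG Hk Hgc Hgi Hcond y Hy) as [muy Hmuy].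
      assert (E1 : Rhaz G u1 - Rhaz G y = muy * (g u1 - g y)) by (apply Hmuy; split; auto; lra).
      assert (E2 : Rhaz G u2 - Rhaz G y = muy * (g u2 - g y)) by (apply Hmuy; split; auto; lra).
      pose proof (Hgi u1 u2 Hu1s Hu2s Hu12) as Hg12.
      assert (Heq : muy = mu).
      { assert ((muy - mu) * (g u2 - g u1) = 0) by nra.
        apply Rmult_integral in H. destruct H; lra. }
      subst muy. lra. }
  set (alpha := Rhaz G s0 - mu * g s0).
  assert (Haff' : forall y, in_supp G y -> Rhaz G y = alpha + mu * g y).
  { intros y Hy. rewrite (Haff y Hy). unfold alpha. ring. }
  assert (Hzero : alpha + mu * gl = 0).
  { apply (small_zero _ (2 + mu)); [lra|].
    intros eta Heta.
    set (e := Rmin eta (1/4)).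
    assert (He : 0 < e) by (unfold e; apply Rmin_pos; lra).
    assert (Hee : e <= eta) by apply Rmin_l.
    assert (He4 : e <= 1/4) by apply Rmin_r.
    destruct (Hgl e He) as [y0 [Hy0 Hy0']].
    destruct Hy0 as [Hy01 Hy02].
    set (v := Rmin e (G y0) / 2).
    assert (Hv : 0 < v) by (unfold v; apply Rdiv_lt_0_compat; [apply Rmin_pos|]; lra).
    assert (Hv1 : v < G y0) by (unfold v; pose proof (Rmin_r e (G y0)); lra).
    assert (Hve : v < e) by (unfold v; pose proof (Rmin_l e (G y0)); lra).
    destruct (G_surj G v HG ltac:(lra)) as [y Hy].
    assert (Hys : in_supp G y) by (unfold in_supp; lra).
    assert (Hyy0 : y < y0) by (apply Hlt; lra).
    pose proof (Hy0' y Hys Hyy0) as Hgy.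
    pose proof (Rhaz_small G y Hys ltac:(lra)) as HR.
    assert (HR0 : 0 <= Rhaz G y).
    { unfold Rhaz. assert (ln (1 - G y) <= ln 1) by (apply ln_le'; lra). rewrite ln_1 in H. lra. }
    rewrite (Haff' y Hys) in HR, HR0.
    replace (alpha + mu * gl) with ((alpha + mu * g y) - mu * (g y - gl)) by ring.
    apply Rabs_def2 in Hgy.
    apply Rabs_le. split; nra. }
  exists mu. split; auto.
  intros y Hy. pose proof (Rhaz_exp G y Hy) as HE. rewrite (Haff' y Hy) in HE.
  replace (- mu * (g y - gl)) with (- (alpha + mu * g y)) by lra. lra.
Qed.


Theorem corollary1 (n k : nat) (G g : R -> R) (gl : R) :
  (2 <= n)%nat -> (1 <= k)%nat -> (k <= n - 1)%nat ->
  is_cont_dist_fun G ->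
  (* g continuous and strictly increasing on (l_G, r_G) *)
  (forall y, in_supp G y -> continuity_pt g y) ->
  (forall x y, in_supp G x -> in_supp G y -> x < y -> g x < g y) ->
  (* gl = g(l_G^+) = lim_{y -> l_G^+} g(y), finite *)
  (forall eps, eps > 0 -> exists y0, in_supp G y0 /\
     forall y, in_supp G y -> y < y0 -> Rabs (g y - gl) < eps) ->
  (* lim_{y -> r_G^-} g(y) = +oo *)
  (forall M, exists y0, in_supp G y0 /\
     forall y, in_supp G y -> y0 < y -> g y > M) ->
  ((forall s t, in_supp G s -> in_supp G t -> s < t -> G s < G t ->
      cond_exp_rec G g k s t ((INR k * g t + g s) / (INR k + 1)))
   <->
   (exists c, c > 0 /\
      forall y, in_supp G y -> G y = 1 - exp (- c * (g y - gl)))).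
Proof.
  intros Hn Hk Hkn HG Hgc Hgi Hgl Hginf. split.
  - intros Hcond. apply (forward G g k gl); auto.
  - intros [c [Hc HGc]] s t Hs Ht Hst _.
    apply (backward G g gl c k s t); auto. exact (Gm G HG).
Qed.
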